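(* Let $(\breve{r}^{(k)})_{k\ge 0}$ be independent real-valued random variables with $\Pr(\breve{r}^{(k)}<0)=\Pr(\breve{r}^{(k)}>0)=\tfrac12$ for all $k$, and for $k\ge1$ let $\psi^{(k)}=1$ if $\mathrm{sgn}(\breve{r}^{(k)})=-\mathrm{sgn}(\breve{r}^{(k-1)})$ and $\psi^{(k)}=0$ otherwise. Fix an integer $\ell\ge 10$ and define the Memoryless Runtime Estimator $$\hat H^{(0)}=\tfrac12,\qquad \hat H^{(k)}=\hat H^{(k-1)}+\frac{\psi^{(k)}-\hat H^{(k-1)}}{\ell},\quad k\ge1.$$ Then the (steady-state) variance of the sign-switching rate estimate is $$\mathrm{Var}[H]=\lim_{k\to\infty}\mathrm{Var}[\hat H^{(k)}]=\frac{\mathbb{E}[H](1-\mathbb{E}[H])}{2\ell-1}=\frac{1}{4(2\ell-1)},$$ where $\mathbb{E}[H]=\tfrac12$ is the expected sign-switching rate.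
   Context: This models a monitoring vehicle $i$ observing a neighbor vehicle $j$ that follows a ''hidden'' virtual spring-damper control model. $\breve{r}^{(k)}$ is the hidden velocity residual (received velocity magnitude of $j$ minus its prediction under the hidden model), modeled under the hidden model as a random sequence with positive and negative values each of probability $\tfrac12$; $\psi^{(k)}$ is the alarm indicating a sign switch at time $k$; $\ell$ is the ''pseudo-window'' length of the estimator and $\hat H^{(k)}\in[0,1]$ is the run-time estimate of the sign-switching alarm rate. *)

(* Defs.v *)
From HB Require Import structures.
From mathcomp Require Import all_boot all_order all_algebra.
From mathcomp Require Import all_classical all_reals all_analysis.
Set Implicit Arguments. Unset Strict Implicit. Unset Printing Implicit Defensive.
Import Order.TTheory GRing.Theory Num.Theory.
Local Open Scope classical_set_scope.
Local Open Scope ring_scope.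

Definition mutually_independent d (T : measurableType d) (R : realType)
  (P : probability T R) (X : nat -> T -> R) : Prop :=
  forall (s : seq nat) (B : nat -> set R),
    uniq s -> (forall i, i \in s -> measurable (B i)) ->
    P (\big[setI/setT]_(i <- s) (X i @^-1` B i)) =
    (\prod_(i <- s) P (X i @^-1` B i))%E.

Definition psi {T} {R : realType} (r : nat -> T -> R) (k : nat) (w : T) : R :=
  if Num.sg (r k w) == - Num.sg (r k.-1 w) then 1 else 0.

Fixpoint Hhat {T} {R : realType} (ell : nat) (r : nat -> T -> R) (k : nat)
  (w : T) : R :=
  match k with
  | 0 => 1 / 2
  | k'.+1 => Hhat ell r k' w + (psi r k'.+1 w - Hhat ell r k' w) / ell%:R
  end.

(* Main.v *)
Require Import Defs.
From HB Require Import structures.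
From mathcomp Require Import all_boot all_order all_algebra.
From mathcomp Require Import all_classical all_reals all_analysis.
From mathcomp Require Import ring lra zify.
Import Order.TTheory GRing.Theory Num.Theory Num.Def.
Import numFieldNormedType.Exports.
Local Open Scope classical_set_scope.
Local Open Scope ring_scope.

Section A.
Context {R : realType}.

Definition sgs : seq R := [:: -1; 0; 1].

Lemma sgE_lits : ((-1 == 1 :> R) = false) * ((1 == -1 :> R) = false) * ((0 == 1 :> R) = false)
  * ((1 == 0 :> R) = false) * ((0 == -1 :> R) = false) * ((-1 == 0 :> R) = false).
Proof.
have h1 : (-1 == 1 :> R) = false by rewrite lt_eqF // ltrN10.
have h2 : (1 == -1 :> R) = false by rewrite eq_sym h1.
have h3 : (1 == 0 :> R) = false by rewrite oner_eq0.
have h4 : (-1 == 0 :> R) = false by rewrite oppr_eq0 oner_eq0.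
by rewrite h1 h2 h3 h4 eq_sym h3 eq_sym h4.
Qed.

Definition Jf (x : R) (s : R) : R := (Num.sg x == s)%:R.

Lemma D1 (x y : R) : (if Num.sg y == - Num.sg x then 1 else 0) =
  \sum_(s <- sgs) Jf x s * Jf y (- s).
Proof.
rewrite /sgs !big_cons big_nil /Jf.
by case: sgrP => _; case: sgrP => _; rewrite ?opprK ?oppr0 ?eqxx ?sgE_lits /=;
  rewrite ?mul0r ?mulr0 ?mul1r ?addr0 ?add0r.
Qed.

Lemma D2 (x y z : R) : (if Num.sg y == - Num.sg x then 1 else 0) * (if Num.sg z == - Num.sg y then 1 else 0) =
  \sum_(s <- sgs) Jf x s * Jf y (- s) * Jf z s.
Proof.
rewrite /sgs !big_cons big_nil /Jf.
case: (sgrP x) => _; case: (sgrP y) => _; case: (sgrP z) => _; rewrite ?opprK ?oppr0 ?eqxx ?sgE_lits /=;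
  rewrite ?mul0r ?mulr0 ?mul1r ?mulr1 ?addr0 ?add0r //.
Qed.

Definition pp (s : R) : R := if s == 0 then 0 else 1 / 2.
End A.

Section B.
Context (d : measure_display) (T : measurableType d) (R : realType)
  (P : probability T R) (r : nat -> {RV P >-> R}).
Hypothesis indep : mutually_independent P (fun k => (r k : T -> R)).
Hypothesis hneg : forall k, P (r k @^-1` [set x | x < 0]) = (1 / 2)%:E.
Hypothesis hpos : forall k, P (r k @^-1` [set x | 0 < x]) = (1 / 2)%:E.

Definition S i (s : R) : set T := (r i : T -> R) @^-1` [set x | Num.sg x = s].
Definition J i (s : R) (w : T) : R := Jf (r i w) s.

Lemma J_indic i s w : J i s w = \1_(S i s) w.
Proof.
rewrite indicE /J /Jf; congr (_%:R).
case: eqP => h; first by rewrite mem_set.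
by case: (boolP (w \in S i s)) => // /set_mem.
Qed.

Lemma measurable_sgset (s : R) : s \in sgs -> measurable [set x : R | Num.sg x = s].
Proof.
rewrite /sgs !inE => /orP[/eqP->|/orP[/eqP->|/eqP->]].
- have -> : [set x : R | Num.sg x = -1] = [set` `]-oo, 0%R[].
    apply/seteqP; split => x /=; rewrite in_itv /=.
      by move=> h; rewrite -sgr_cp0 h.
    by move=> h; apply/eqP; rewrite sgr_cp0.
  exact: measurable_itv.
- have -> : [set x : R | Num.sg x = 0] = [set 0].
    apply/seteqP; split => x /=.
      by move/eqP; rewrite sgr_cp0 => /eqP.
    by move=> ->; rewrite sgr0.
  exact: measurable_set1.
- have -> : [set x : R | Num.sg x = 1] = [set` `]0%R, +oo[].
    apply/seteqP; split => x /=; rewrite in_itv /= ?andbT.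
      by move=> h; rewrite -sgr_cp0 h.
    by move=> h; apply/eqP; rewrite sgr_cp0.
  exact: measurable_itv.
Qed.

Lemma mr i : measurable_fun setT (r i : T -> R).
Proof. exact: measurable_funPT. Qed.

Lemma sg_in_sgs (x : R) : Num.sg x \in sgs.
Proof. by rewrite /sgs !inE; case: sgrP; rewrite eqxx ?orbT. Qed.

Lemma measurable_S i s : measurable (S i s).
Proof.
case hs: (s \in sgs).
  rewrite /S -[_ @^-1` _]setTI.
  by apply: (mr i) => //; exact: measurable_sgset.
have -> : S i s = set0; last exact: measurable0.
apply/seteqP; split => x //; rewrite /S /= => h.
by move: (sg_in_sgs (r i x)); rewrite h hs.
Qed.

Lemma PS i s : s \in sgs -> P (S i s) = (pp s)%:E.
Proof.
have Sn : S i (-1) = r i @^-1` [set x | x < 0].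
  apply/seteqP; split => x /=; first by move=> h; rewrite -sgr_cp0 h.
  by move=> h; apply/eqP; rewrite sgr_cp0.
have Sp : S i 1 = r i @^-1` [set x | 0 < x].
  apply/seteqP; split => x /=; first by move=> h; rewrite -sgr_cp0 h.
  by move=> h; apply/eqP; rewrite sgr_cp0.
rewrite /sgs !inE => /orP[/eqP->|/orP[/eqP->|/eqP->]].
- by rewrite Sn hneg /pp sgE_lits.
- have -> : S i 0 = ~` (S i (-1) `|` S i 1).
    apply/seteqP; split => x /=.
      by move=> h [] h'; move: h h'; rewrite /S /= => -> /eqP; rewrite sgE_lits.
    rewrite /S /=; case: sgrP => _ h //; exfalso; apply: h; by [left|right].
  rewrite probability_setC; last first.
    by apply: measurableU; apply: measurable_S.
  rewrite measureU; last first.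
  + by apply/seteqP; split => x //; rewrite /S /= => -[-> /eqP]; rewrite sgE_lits.
  + exact: measurable_S.
  + exact: measurable_S.
  have h1 : P (S i (-1)) = (1/2)%:E by rewrite Sn hneg.
  have h2 : P (S i 1) = (1/2)%:E by rewrite Sp hpos.
  transitivity (1 - ((1/2 : R)%:E + (1/2 : R)%:E))%E; first by congr (1 - (_ + _))%E.
  have e : (1/2 + 1/2 : R) = 1 by lra.
  by rewrite -EFinD e /pp eqxx subrr.
- by rewrite Sp hpos /pp sgE_lits.
Qed.

Definition good (f : T -> R) := measurable_fun setT f /\ exists M, forall x, `|f x| <= M.

Lemma good_Lfun f : good f -> f \in Lfun P 1.
Proof.
case=> mf [M hM]; apply/Lfun1_integrable; apply: measurable_bounded_integrable => //.
  by apply: (le_lt_trans (probability_le1 _ measurableT)); rewrite ltry.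
exists M; split; first by rewrite num_real.
by move=> y My x _; apply: le_trans (hM x) (ltW My).
Qed.

Lemma good_cst c : good (fun _ => c).
Proof. by split; [exact: measurable_cst|exists `|c|]. Qed.

Lemma good_add f g : good f -> good g -> good (fun w => f w + g w).
Proof.
move=> [mf [M hM]] [mg [N hN]]; split; first exact: measurable_realfun.measurable_funD.
by exists (M + N) => x; apply: le_trans (ler_normD _ _) (lerD (hM x) (hN x)).
Qed.

Lemma good_mul f g : good f -> good g -> good (fun w => f w * g w).
Proof.
move=> [mf [M hM]] [mg [N hN]]; split; first exact: measurable_realfun.measurable_funM.
exists (M * N) => x; rewrite normrM; apply: ler_pM => //.
Qed.

Lemma good_sum (I : Type) (s : seq I) (F : I -> T -> R) :
  (forall i, good (F i)) -> good (fun w => \sum_(i <- s) F i w).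
Proof.
move=> hF; elim: s => [|a s IH].
  by under eq_fun do rewrite big_nil; exact: good_cst.
by under eq_fun do rewrite big_cons; exact: good_add.
Qed.

Lemma good_J i s : good (J i s).
Proof.
have -> : J i s = \1_(S i s) by apply/funext => w; rewrite J_indic.
split; first exact/measurable_realfun.measurable_indic/measurable_S.
by exists 1 => x; rewrite indicE; case: (_ \in _); rewrite ?normr1 ?normr0.
Qed.

Lemma E_add f g : good f -> good g ->
  ('E_P[fun w => (f w + g w)%R] = 'E_P[f] + 'E_P[g])%E.
Proof. by move=> /good_Lfun hf /good_Lfun hg; rewrite -expectationD. Qed.

Lemma E_scale k f : good f -> ('E_P[fun w => (k * f w)%R] = k%:E * 'E_P[f])%E.
Proof.
move=> /good_Lfun hf; rewrite -(expectationZl k hf); congr expectation.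
by apply/funext => w /=; rewrite mulrC.
Qed.

Lemma E_sum (I : Type) (s : seq I) (F : I -> T -> R) :
  (forall i, good (F i)) -> ('E_P[fun w => (\sum_(i <- s) F i w)%R] = \sum_(i <- s) 'E_P[F i])%E.
Proof.
move=> hF; elim: s => [|a s IH].
  by under eq_fun do rewrite big_nil; rewrite big_nil expectation_cst.
under eq_fun do rewrite big_cons; rewrite E_add ?big_cons ?IH //.
exact: good_sum.
Qed.

Lemma prodJ (s : seq nat) (sig : nat -> R) : uniq s -> (forall i, sig i \in sgs) ->
  ('E_P[fun w => (\prod_(i <- s) J i (sig i) w)%R] = (\prod_(i <- s) pp (sig i))%:E)%E.
Proof.
move=> us hs.
have -> : (fun w => \prod_(i <- s) J i (sig i) w) = \1_(\big[setI/setT]_(i <- s) S i (sig i)).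
  apply/funext => w; elim: s {us} => [|a s IH].
    by rewrite !big_nil indicE in_setT.
  by rewrite !big_cons indicI /= IH J_indic.
rewrite expectation_indic; last by apply: bigsetI_measurable => i _; exact: measurable_S.
rewrite (indep s (fun i => [set x | Num.sg x = sig i])) //; last first.
  by move=> i _; exact: measurable_sgset.
rewrite -prodEFin; apply: eq_bigr => i _; exact: PS.
Qed.

Local Notation rr := (fun k => (r k : T -> R)).

Lemma sgsN (s : R) : s \in sgs -> - s \in sgs.
Proof. by rewrite /sgs !inE => /or3P[]/eqP->; rewrite ?opprK ?oppr0 eqxx ?orbT. Qed.

Lemma ppE : (pp (1 : R) = 1/2) * (pp (-1 : R) = 1/2) * (pp (0 : R) = 0).
Proof. by rewrite /pp eqxx !sgE_lits. Qed.

Lemma E2 a b sa sb : a != b -> sa \in sgs -> sb \in sgs ->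
  ('E_P[fun w => (J a sa w * J b sb w)%R] = (pp sa * pp sb)%:E)%E.
Proof.
move=> ab ha hb.
have nba : (b == a) = false by rewrite eq_sym (negbTE ab).
pose sig := fun i => if i == a then sa else sb.
have hs : forall i, sig i \in sgs by move=> i; rewrite /sig; case: ifP.
have u : uniq [:: a; b] by rewrite /= inE ab.
have -> : (fun w => (J a sa w * J b sb w)%R) = (fun w => \prod_(i <- [:: a; b]) J i (sig i) w)%R.
  by apply/funext => w; rewrite !big_cons big_nil /sig eqxx nba mulr1.
by rewrite prodJ // !big_cons big_nil /sig eqxx nba mulr1.
Qed.

Lemma E3 a b c sa sb sc : uniq [:: a; b; c] -> sa \in sgs -> sb \in sgs -> sc \in sgs ->
  ('E_P[fun w => (J a sa w * J b sb w * J c sc w)%R] = (pp sa * pp sb * pp sc)%:E)%E.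
Proof.
move=> u ha hb hc.
move: (u) => /=; rewrite !inE !negb_or => /andP[/andP[ab ac] /andP[bc _]].
have nba : (b == a) = false by rewrite eq_sym (negbTE ab).
have nca : (c == a) = false by rewrite eq_sym (negbTE ac).
have ncb : (c == b) = false by rewrite eq_sym (negbTE bc).
pose sig := fun i => if i == a then sa else if i == b then sb else sc.
have hs : forall i, sig i \in sgs by move=> i; rewrite /sig; case: ifP => //; case: ifP.
have -> : (fun w => (J a sa w * J b sb w * J c sc w)%R) = (fun w => \prod_(i <- [:: a; b; c]) J i (sig i) w)%R.
  by apply/funext => w; rewrite !big_cons big_nil /sig !eqxx nba nca ncb mulr1 !mulrA.
by rewrite prodJ // !big_cons big_nil /sig !eqxx nba nca ncb mulr1 !mulrA.
Qed.

Lemma E4 a b c e sa sb sc se : uniq [:: a; b; c; e] -> sa \in sgs -> sb \in sgs ->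
  sc \in sgs -> se \in sgs ->
  ('E_P[fun w => (J a sa w * J b sb w * (J c sc w * J e se w))%R] =
    (pp sa * pp sb * (pp sc * pp se))%:E)%E.
Proof.
move=> u ha hb hc he.
move: (u) => /=; rewrite !inE !negb_or => /andP[/and3P[ab ac ae] /andP[/andP[bc be] /andP[ce _]]].
have nba : (b == a) = false by rewrite eq_sym (negbTE ab).
have nca : (c == a) = false by rewrite eq_sym (negbTE ac).
have nea : (e == a) = false by rewrite eq_sym (negbTE ae).
have ncb : (c == b) = false by rewrite eq_sym (negbTE bc).
have neb : (e == b) = false by rewrite eq_sym (negbTE be).
have nec : (e == c) = false by rewrite eq_sym (negbTE ce).
pose sig := fun i => if i == a then sa else if i == b then sb else if i == c then sc else se.
have hs : forall i, sig i \in sgs.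
  by move=> i; rewrite /sig; case: ifP => //; case: ifP => //; case: ifP.
have -> : (fun w => (J a sa w * J b sb w * (J c sc w * J e se w))%R) =
    (fun w => \prod_(i <- [:: a; b; c; e]) J i (sig i) w)%R.
  by apply/funext => w; rewrite !big_cons big_nil /sig !eqxx nba nca nea ncb neb nec mulr1 !mulrA.
by rewrite prodJ // !big_cons big_nil /sig !eqxx nba nca nea ncb neb nec mulr1 !mulrA.
Qed.

Lemma psiE k w : psi rr k w = \sum_(s <- sgs) J k.-1 s w * J k (- s) w.
Proof. by rewrite /psi D1. Qed.

Lemma good_psi k : good (psi rr k).
Proof.
have -> : psi rr k = (fun w => \sum_(s <- sgs) J k.-1 s w * J k (- s) w).
  by apply/funext => w; exact: psiE.
by apply: good_sum => s; apply: good_mul; exact: good_J.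
Qed.

Lemma E_psi k : (0 < k)%N -> ('E_P[psi rr k] = (1/2)%:E)%E.
Proof.
move=> k0.
have -> : psi rr k = (fun w => \sum_(s <- sgs) J k.-1 s w * J k (- s) w).
  by apply/funext => w; exact: psiE.
rewrite E_sum; last by move=> s; apply: good_mul; exact: good_J.
rewrite (eq_big_seq (fun s => (pp s * pp (- s))%:E)); last first.
  move=> s hs; apply: E2 => //; last exact: sgsN.
  lia.
rewrite sumEFin /sgs !big_cons big_nil opprK oppr0 !ppE; congr (_%:E); lra.
Qed.

Lemma psi2 k w : psi rr k w * psi rr k w = psi rr k w.
Proof. by rewrite /psi; case: ifP => _; rewrite ?mulr1 ?mulr0. Qed.

Lemma E_psipsi i j : (0 < i)%N -> (i < j)%N ->
  ('E_P[fun w => (psi rr i w * psi rr j w)%R] = (1/4)%:E)%E.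
Proof.
move=> i0 ij.
have ipos : i = i.-1.+1 by rewrite prednK.
case: (ltngtP j i.+1) => hj; first by rewrite ltnS leqNgt ij in hj.
-
  have -> : (fun w => psi rr i w * psi rr j w) = (fun w => \sum_(s <- sgs) \sum_(t <- sgs)
      (J i.-1 s w * J i (- s) w * (J j.-1 t w * J j (- t) w))).
    apply/funext => w; rewrite !psiE mulr_suml; apply: eq_bigr => s _.
    by rewrite mulr_sumr.
  rewrite E_sum; last first.
    move=> s; apply: good_sum => t; repeat apply: good_mul; exact: good_J.
  rewrite (eq_big_seq (fun s => \sum_(t <- sgs) (pp s * pp (- s) * (pp t * pp (- t)))%:E)); last first.
    move=> s hs; rewrite E_sum; last by move=> t; repeat apply: good_mul; exact: good_J.
    apply: eq_big_seq => t ht; apply: E4 => //; try exact: sgsN.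
    rewrite /= !inE; lia.
  under eq_bigr do rewrite sumEFin.
  rewrite sumEFin /sgs !big_cons !big_nil opprK oppr0 !ppE; congr (_%:E); lra.
-
  subst j.
  have -> : (fun w => psi rr i w * psi rr i.+1 w) = (fun w => \sum_(s <- sgs)
      (J i.-1 s w * J i (- s) w * J i.+1 s w)).
    by apply/funext => w; rewrite /psi /= D2.
  rewrite E_sum; last by move=> s; repeat apply: good_mul; exact: good_J.
  rewrite (eq_big_seq (fun s => (pp s * pp (- s) * pp s)%:E)); last first.
    move=> s hs; apply: E3 => //; last exact: sgsN.
    rewrite /= !inE; lia.
  rewrite sumEFin /sgs !big_cons big_nil opprK oppr0 !ppE; congr (_%:E); lra.
Qed.

Variable ell : nat.
Local Notation hh k := (Hhat ell rr k).
Local Notation u := (ell%:R^-1 : R).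

Lemma Hrec k w : hh k.+1 w = (1 - u) * hh k w + u * psi rr k.+1 w.
Proof. by rewrite /=; ring. Qed.

Lemma good_H k : good (hh k).
Proof.
elim: k => [|k IH]; first exact: good_cst.
have -> : hh k.+1 = (fun w => (1 - u) * hh k w + u * psi rr k.+1 w).
  by apply/funext => w; exact: Hrec.
apply: good_add; apply: good_mul => //; try exact: good_cst; exact: good_psi.
Qed.

Lemma E_H k : ('E_P[hh k] = (1/2)%:E)%E.
Proof.
elim: k => [|k IH].
  by have -> : hh 0 = cst (1/2) by []; rewrite expectation_cst.
have -> : hh k.+1 = (fun w => (1 - u) * hh k w + u * psi rr k.+1 w).
  by apply/funext => w; exact: Hrec.
rewrite E_add; try (apply: good_mul; [exact: good_cst| first [exact: good_H|exact: good_psi]]).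
rewrite !E_scale ?IH ?E_psi //; try exact: good_H; try exact: good_psi.
by rewrite -!EFinM -EFinD; congr (_%:E); ring.
Qed.

Lemma E_Hpsi k m : (k < m)%N -> ('E_P[fun w => (hh k w * psi rr m w)%R] = (1/4)%:E)%E.
Proof.
elim: k => [|k IH] hk.
  rewrite E_scale ?E_psi //; last exact: good_psi.
  by rewrite -EFinM; congr (_%:E); lra.
have -> : (fun w => hh k.+1 w * psi rr m w) =
   (fun w => (1 - u) * (hh k w * psi rr m w) + u * (psi rr k.+1 w * psi rr m w)).
  by apply/funext => w; rewrite Hrec; ring.
rewrite E_add; try (apply: good_mul; [exact: good_cst| apply: good_mul; first [exact: good_H|exact: good_psi]]).
rewrite !E_scale; try (apply: good_mul; first [exact: good_H|exact: good_psi]).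
rewrite IH; last exact: ltnW.
rewrite E_psipsi //.
by rewrite -!EFinM -EFinD; congr (_%:E); ring.
Qed.

Fixpoint vq (k : nat) : R :=
  if k is k'.+1 then (1 - u) ^+ 2 * vq k' + (1 - u) * u / 2 + u ^+ 2 / 2 else 1/4.

Lemma E_H2 k : ('E_P[fun w => (hh k w * hh k w)%R] = (vq k)%:E)%E.
Proof.
elim: k => [|k IH].
  rewrite /=; have -> : (fun _ : T => 1/2 * (1/2) : R) = cst (1/4) by apply/funext => w /=; lra.
  by rewrite expectation_cst.
have e : forall h p : R, p * p = p -> ((1-u)*h + u * p) * ((1-u)*h + u * p) =
    (1 - u) ^+ 2 * (h * h) + (2 * (1 - u) * u) * (h * p) + u ^+ 2 * p.
  move=> h p hp.
  transitivity ((1 - u) ^+ 2 * (h * h) + (2 * (1 - u) * u) * (h * p) + u ^+ 2 * (p * p)).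
    by ring.
  by rewrite hp.
have -> : (fun w => hh k.+1 w * hh k.+1 w) =
   (fun w => ((1 - u) ^+ 2 * (hh k w * hh k w) + (2 * (1 - u) * u) * (hh k w * psi rr k.+1 w))
        + u ^+ 2 * psi rr k.+1 w).
  by apply/funext => w; rewrite Hrec e // psi2.
have gH := good_H k; have gp := good_psi k.+1.
rewrite E_add; last 2 first.
- by apply: good_add; apply: good_mul; try exact: good_cst; apply: good_mul.
- by apply: good_mul; try exact: good_cst.
rewrite E_add; try (by apply: good_mul; try exact: good_cst; apply: good_mul).
rewrite !E_scale; try (by apply: good_mul); try exact: gp.
rewrite IH E_Hpsi // E_psi //.
rewrite -!EFinM -!EFinD; apply: congr1 => /=; by move: (ell%:R^-1 : R) (vq k) => v q; field.
Qed.

Lemma E_cst (c : R) : ('E_P[fun _ : T => c] = c%:E)%E.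
Proof. exact: expectation_cst. Qed.

Lemma V_H k : ('V_P[hh k] = (vq k - 1/4)%:E)%E.
Proof.
rewrite /variance covariance.unlock E_H /=.
transitivity ('E_P[fun w => ((hh k w * hh k w + (-1) * hh k w) + 1/4)%R])%E.
  by congr expectation; apply/funext => w; rewrite mulrfctE /=; field.
have gH := good_H k.
rewrite E_add; last 2 first.
- by apply: good_add; [apply: good_mul|apply: good_mul => //; exact: good_cst].
- exact: good_cst.
rewrite E_add; [|by apply: good_mul|by apply: good_mul => //; exact: good_cst].
rewrite E_scale // E_H2 E_H E_cst -EFinM -!EFinD; by congr (_%:E); field.
Qed.

Hypothesis hell : (10 <= ell)%N.

Let hl : (10 : R) <= ell%:R.
Proof. by rewrite ler_nat. Qed.

Let ell0 : ell%:R != 0 :> R.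
Proof. by rewrite gt_eqF // (lt_le_trans _ hl). Qed.

Let u0 : 0 < u.
Proof. by rewrite invr_gt0 (lt_le_trans _ hl). Qed.

Let uell : u * ell%:R = 1.
Proof. by rewrite mulVf. Qed.

Let u1 : u <= 1/10.
Proof. have h1 := uell; have h2 := hl; have h3 := u0; nra. Qed.

Definition LL := u / (4 * (2 - u)).

Lemma vq_closed k : vq k = 1/4 + LL * (1 - ((1 - u) ^+ 2) ^+ k).
Proof.
have h2 : 2 - u != 0 by have h := u1; rewrite gt_eqF //; lra.
elim: k => [|k IH]; first by rewrite /= expr0 subrr mulr0 addr0.
rewrite /= IH /LL.
have -> : ((1 - u) ^+ 2) ^+ k.+1 = (1-u)^+2 * ((1-u)^+2)^+k by rewrite exprS.
move: (((1 - u) ^+ 2) ^+ k) => z.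
move: (ell%:R^-1 : R) h2 => v h2.
by field.
Qed.

Lemma main_sec :
  let EH : R := 1 / 2 in
  ('E_P[Hhat ell (fun k => (r k : T -> R)) k] @[k --> \oo] --> EH%:E)%E /\
  ('V_P[Hhat ell (fun k => (r k : T -> R)) k] @[k --> \oo]
     --> (EH * (1 - EH) / (2 * ell%:R - 1))%:E)%E /\
  EH * (1 - EH) / (2 * ell%:R - 1) = 1 / (4 * (2 * ell%:R - 1)).
Proof.
move=> EH.
have h2l : 2 * ell%:R - 1 != 0 :> R by have h := hl; rewrite gt_eqF //; lra.
split.
  have -> : (fun k => 'E_P[hh k])%E = (fun _ => EH%:E).
    by apply/funext => k; rewrite E_H.
  exact: cvg_cst.
split; last by rewrite /EH; field.
have -> : (fun k => 'V_P[hh k])%E = (fun k => (LL * (1 - ((1 - u) ^+ 2) ^+ k))%:E).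
  by apply/funext => k; rewrite V_H vq_closed; congr (_%:E); ring.
apply: cvg_EFin; first exact: nearW.
have -> : EH * (1 - EH) / (2 * ell%:R - 1) = LL * (1 - 0).
  by rewrite /EH /LL; field; rewrite ell0 h2l.
rewrite /comp /=.
apply: cvgMl_tmp.
have hz : `|(1 - u) ^+ 2| < 1.
  have h := u1; have h' := u0.
  by rewrite ger0_norm ?sqr_ge0 //; nra.
have hc := cvg_expr hz.
have hb := cvgB (cvg_cst (1:R)) hc.
exact: hb.
Qed.
End B.

Theorem lemma3 (d : measure_display) (T : measurableType d) (R : realType)
  (P : probability T R) (r : nat -> {RV P >-> R}) (ell : nat) :
  (10 <= ell)%N ->
  mutually_independent P (fun k => (r k : T -> R)) ->
  (forall k, P (r k @^-1` [set x | x < 0]) = (1 / 2)%:E) ->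
  (forall k, P (r k @^-1` [set x | 0 < x]) = (1 / 2)%:E) ->
  let EH : R := 1 / 2 in
  ('E_P[Hhat ell (fun k => (r k : T -> R)) k] @[k --> \oo] --> EH%:E)%E /\
  ('V_P[Hhat ell (fun k => (r k : T -> R)) k] @[k --> \oo]
     --> (EH * (1 - EH) / (2 * ell%:R - 1))%:E)%E /\
  EH * (1 - EH) / (2 * ell%:R - 1) = 1 / (4 * (2 * ell%:R - 1)).
Proof.
move=> hell hind hn hp.
exact: (@main_sec d T R P r hind hn hp ell hell).
Qed.
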